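(* Let $\mathrm{X} \coloneqq \{\lambda_1, \dots, \lambda_L\}$, $\mathrm{X}_1 \coloneqq \{\lambda_2, \dots, \lambda_L\}$ and $\mathrm{X}_1^0 \coloneqq \{\lambda_0, \lambda_2, \dots, \lambda_L\}$. The functions $\mathcal{Z}$ and $\bar{\mathcal{H}}$ satisfy \[ \bar{\Omega}_0 \; \mathcal{Z}(\mathrm{X}) + \bar{\Omega}_1 \; \mathcal{Z}(\mathrm{X}_1^0) = \bar{\Upsilon}_0 \; \bar{\mathcal{H}} (\lambda_1 , \lambda_0 \mid \mathrm{X}_1)+ \bar{\Upsilon}_1 \; \bar{\mathcal{H}} (\lambda_0 , \lambda_1 \mid \mathrm{X}_1), \] with coefficients \begin{align*} \bar{\Omega}_0 &\coloneqq \left[\frac{d_{1,1}(\lambda_1 - \lambda_0)}{d_{1,2}(\lambda_1 - \lambda_0)} - \frac{d_{3,1}(\lambda_1 - \lambda_0)}{ d_{3,2}(\lambda_1 - \lambda_0)} \right] \bar{\Lambda} (\lambda_0), \qquad \bar{\Omega}_1 \coloneqq \frac{a(\lambda_1 - \lambda_0)}{ d_{3,2}(\lambda_1 - \lambda_0)} \bar{\Lambda} (\lambda_1), \\ \bar{\Upsilon}_0 &\coloneqq \left[ \frac{d_{2,1}(\lambda_1 - \lambda_0)}{ d_{3,2}(\lambda_1 - \lambda_0)} - \frac{d_{2,2}(\lambda_1 - \lambda_0)}{ d_{3,2}(\lambda_1 - \lambda_0)} \frac{d_{1,1}(\lambda_1 - \lambda_0)}{d_{1,2}(\lambda_1 -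 \lambda_0)} \right] \bar{\omega}(\lambda_0), \qquad \bar{\Upsilon}_1 \coloneqq \frac{a(\lambda_1 - \lambda_0)}{ d_{3,2}(\lambda_1 - \lambda_0)} \frac{d_{1,1}(\lambda_1 - \lambda_0)}{d_{1,2}(\lambda_1 - \lambda_0)} \bar{\omega}(\lambda_1). \end{align*}
   Context: Setting: the Izergin–Korepin (IK) and Fateev–Zamolodchikov (FZ) nineteen-vertex models. With $x = e^{2\lambda}$, $q = e^{\gamma}$ and $\zeta = q$ (FZ) or $\zeta = -q^3$ (IK), the statistical weights are $a(\lambda) = (x-\zeta)(x-q^2)$, $b(\lambda) = q(x-1)(x-\zeta)$, $c(\lambda) = (1-q^2)(x-\zeta)$, $\bar c(\lambda) = x(1-q^2)(x-\zeta)$, and, with $\beta' \coloneqq 4-\beta$, $d_{\alpha,\beta}(\lambda) = q(x-1)(x-\zeta) + x(q^2-1)(\zeta-1)$ if $\alpha=\beta=\beta'$; $(x-1)[(x-\zeta)+x(q^2-1)]$ if $\alpha=\beta\neq\beta'$; $(q^2-1)[\zeta(x-1)q^{(\alpha-\beta)/2} - \delta_{\alpha\beta'}(x-\zeta)]$ if $\alpha<\beta$; $x(q^2-1)[(x-1)q^{(\alpha-\beta)/2} - \delta_{\alpha\beta'}(x-\zeta)]$ if $\alpha>\beta$. These form a $9\times 9$ $\mathcal{R}$-matrix solving the Yang–Baxter equation. The monodromy matrix is $\mathcal{T}(\lambda) = \mathcal{R}_{a1}(\lambda-\mu_1)\cdots\mathcal{R}_{aL}(\lambda-\mu_L)$ (inhomogeneities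 $\mu_j$), whose $(1,1)$, $(1,2)$, $(1,3)$ entries are denoted $\mathcal{A}(\lambda)$, $\mathcal{B}(\lambda)$, $\mathcal{E}(\lambda)$. Let $\ket{0} = e_1^{\otimes L}$, $\bra{\bar 0} = (e_3^{\otimes L})^{T}$. Partition functions: $\mathcal{Z}(\lambda_1,\dots,\lambda_L) = \bra{\bar 0}\mathcal{E}(\lambda_L)\cdots\mathcal{E}(\lambda_1)\ket{0}$ (symmetric), and $\bar{\mathcal{F}}(v_1,v_2\mid u_1,\dots,u_{L-1}) = \bra{\bar 0}\mathcal{B}(v_2)\mathcal{B}(v_1)\mathcal{E}(u_{L-1})\cdots\mathcal{E}(u_1)\ket{0}$ (symmetric in the $u_i$). Define $\bar\omega(\lambda) \coloneqq \prod_{j=1}^L (e^{2\lambda} - e^{2\mu_j})$ and $\bar{\mathcal{H}}$ by $\bar{\mathcal{F}}(v_1,v_2\mid u_1,\dots,u_{L-1}) = \bar\omega(v_2)\,\bar{\mathcal{H}}(v_1,v_2\mid u_1,\dots,u_{L-1})$. Also $\bar\Lambda(\lambda) \coloneqq \prod_{j=1}^L d_{1,1}(\lambda-\mu_j)$. A set of variables as argument denotes the corresponding (symmetric) arguments. *)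

(* Defs.v *)
From HB Require Import structures.
From mathcomp Require Import all_boot all_order all_algebra.
Set Implicit Arguments.
Unset Strict Implicit.
Unset Printing Implicit Defensive.
Import Order.TTheory GRing.Theory Num.Theory.
Local Open Scope ring_scope.

(* Multiplicative parametrisation: a spectral parameter lambda is encoded by
   x = e^{2 lambda}, an inhomogeneity mu_j by m_j = e^{2 mu_j}, so that the
   weight at lambda - mu_j is evaluated at x / m_j.  The anisotropy is encoded
   by s = q^{1/2} = e^{gamma/2}, so q = s^2 and q^{(alpha-beta)/2} = s^(alpha-beta).
   IK = true : Izergin-Korepin (zeta = -q^3);  IK = false : Fateev-Zamolodchikov
   (zeta = q). *)

Section NineteenVertex.
Variable K : fieldType.
Variable IK : bool.
Variable s : K.

Definition qq : K := s ^+ 2.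
Definition zeta : K := if IK then - qq ^+ 3 else qq.

Definition wa (x : K) : K := (x - zeta) * (x - qq ^+ 2).
Definition wb (x : K) : K := qq * (x - 1) * (x - zeta).
Definition wc (x : K) : K := (1 - qq ^+ 2) * (x - zeta).
Definition wcbar (x : K) : K := x * (1 - qq ^+ 2) * (x - zeta).

(* d_{alpha,beta}(x), alpha, beta in {1,2,3}; beta' = 4 - beta *)
Definition wd (x : K) (al be : nat) : K :=
  let dl : K := if al == (4 - be)%N then 1 else 0 in
  if al == be then
    (if al == (4 - be)%N
     then qq * (x - 1) * (x - zeta) + x * (qq ^+ 2 - 1) * (zeta - 1)
     else (x - 1) * ((x - zeta) + x * (qq ^+ 2 - 1)))
  else if (al < be)%N then
    (qq ^+ 2 - 1) * (zeta * (x - 1) * s ^ (Posz al - Posz be) - dl * (x - zeta))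
  else
    x * (qq ^+ 2 - 1) * ((x - 1) * s ^ (Posz al - Posz be) - dl * (x - zeta)).

(* R-matrix entry  R_{(i,j),(k,l)}(x), basis e_i (x) e_j with i,j : 'I_3
   (0-based, i.e. e_{i+1}).  Row (i,j), column (k,l). *)
Definition Rent (x : K) (i j k l : 'I_3) : K :=
  if (i + j != k + l)%N then 0
  else if (i + j == 2)%N then wd x i.+1 k.+1
  else if (i == j) && (j == k) && (k == l) then wa x
  else if (i == k) && (j == l) then wb x
  else if (i == l) && (j == k) then (if (i < j)%N then wc x else wcbar x)
  else 0.

Variable L : nat.
Variable mu : 'I_L -> K.

Definition cfg := {ffun 'I_L -> 'I_3}.

(* Entry (A,B) of the monodromy matrix
   T(x) = R_{a1}(x/m_1) ... R_{aL}(x/m_L), as a kernel on the quantum space: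
   Tent x A B sigma tau = < sigma | T_{AB}(x) | tau >. *)
Definition Tent (x : K) (A B : 'I_3) (sg tau : cfg) : K :=
  \sum_(p : {ffun 'I_L.+1 -> 'I_3} | (p ord0 == A) && (p ord_max == B))
    \prod_(j < L) Rent (x / mu j) (p (inord j)) (sg j) (p (inord j.+1)) (tau j).

Definition opapp (O : cfg -> cfg -> K) (v : cfg -> K) : cfg -> K :=
  fun sg => \sum_(tau : cfg) O sg tau * v tau.

Definition vac0 : cfg -> K := fun tau => if tau == [ffun => ord0] then 1 else 0.
Definition cfg3 : cfg := [ffun => ord_max].

Definition Aop x := Tent x ord0 ord0.
Definition Bop x := Tent x ord0 (inord 1).
Definition Eop x := Tent x ord0 ord_max.

(* E(x_k) ... E(x_1) |0>  for us = [:: x_1; ...; x_k] *)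
Definition Estates (us : seq K) : cfg -> K :=
  foldl (fun v u => opapp (Eop u) v) vac0 us.

(* Z(lambda_1,...,lambda_L) = <0bar| E(lambda_L) ... E(lambda_1) |0> *)
Definition ZZ (xs : seq K) : K := Estates xs cfg3.

(* Fbar(v1,v2 | u_1..u_{L-1}) = <0bar| B(v2) B(v1) E(u_{L-1}) ... E(u_1) |0> *)
Definition Fbar (v1 v2 : K) (us : seq K) : K :=
  opapp (Bop v2) (opapp (Bop v1) (Estates us)) cfg3.

Definition omegabar (y : K) : K := \prod_(j < L) (y - mu j).
Definition Lambdabar (y : K) : K := \prod_(j < L) wd (y / mu j) 1 1.

Definition Hbar (v1 v2 : K) (us : seq K) : K := Fbar v1 v2 us / omegabar v2.

End NineteenVertex.

(* Main.v *)
Require Import Defs.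
From HB Require Import structures.
From mathcomp Require Import all_boot all_order all_algebra.
From mathcomp Require Import fraction.
From mathcomp Require Import ring.
Import Order.TTheory GRing.Theory Num.Theory.
Local Open Scope ring_scope.

Set Implicit Arguments.
Unset Strict Implicit.
Unset Printing Implicit Defensive.

Section Generic.
Variable R : comUnitRingType.
Variable IK : bool.
Variable s : R.

Definition qqG : R := s ^+ 2.
Definition zetaG : R := if IK then - qqG ^+ 3 else qqG.
Definition waG (x : R) : R := (x - zetaG) * (x - qqG ^+ 2).
Definition wbG (x : R) : R := qqG * (x - 1) * (x - zetaG).
Definition wcG (x : R) : R := (1 - qqG ^+ 2) * (x - zetaG).
Definition wcbarG (x : R) : R := x * (1 - qqG ^+ 2) * (x - zetaG).
Definition wdG (x : R) (al be : nat) : R :=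
  let dl : R := if al == (4 - be)%N then 1 else 0 in
  if al == be then
    (if al == (4 - be)%N
     then qqG * (x - 1) * (x - zetaG) + x * (qqG ^+ 2 - 1) * (zetaG - 1)
     else (x - 1) * ((x - zetaG) + x * (qqG ^+ 2 - 1)))
  else if (al < be)%N then
    (qqG ^+ 2 - 1) * (zetaG * (x - 1) * s ^ (Posz al - Posz be) - dl * (x - zetaG))
  else
    x * (qqG ^+ 2 - 1) * ((x - 1) * s ^ (Posz al - Posz be) - dl * (x - zetaG)).
Definition RentG (x : R) (i j k l : 'I_3) : R :=
  if (i + j != k + l)%N then 0
  else if (i + j == 2)%N then wdG x i.+1 k.+1
  else if (i == j) && (j == k) && (k == l) then waG x
  else if (i == k) && (j == l) then wbG x
  else if (i == l) && (j == k) then (if (i < j)%N then wcG x else wcbarG x)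
  else 0.
Definition TentG L (mu : 'I_L -> R) (x : R) (A B : 'I_3) (sg tau : cfg L) : R :=
  \sum_(p : {ffun 'I_L.+1 -> 'I_3} | (p ord0 == A) && (p ord_max == B))
    \prod_(j < L) RentG (x / mu j) (p (inord j)) (sg j) (p (inord j.+1)) (tau j).
End Generic.

Lemma RentE (K : fieldType) IK (s x : K) i j k l :
  Rent IK s x i j k l = RentG IK s x i j k l.
Proof. by []. Qed.
Lemma TentE (K : fieldType) IK (s : K) L mu x A B sg tau :
  Tent IK s (L:=L) mu x A B sg tau = TentG IK s mu x A B sg tau.
Proof. by []. Qed.
Lemma wdE (K : fieldType) IK (s x : K) a b : wd IK s x a b = wdG IK s x a b.
Proof. by []. Qed.
Lemma waE (K : fieldType) IK (s x : K) : wa IK s x = waG IK s x.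
Proof. by []. Qed.

Definition fcons (T : Type) n (t : T) (g : {ffun 'I_n -> T}) : {ffun 'I_n.+1 -> T} :=
  [ffun i => if unlift ord0 i is Some j then g j else t].
Definition ftail (T : Type) n (f : {ffun 'I_n.+1 -> T}) : {ffun 'I_n -> T} :=
  [ffun j => f (lift ord0 j)].

Lemma fcons0 (T : Type) n t (g : {ffun 'I_n -> T}) : fcons t g ord0 = t.
Proof. by rewrite ffunE unlift_none. Qed.
Lemma fconsS (T : Type) n t (g : {ffun 'I_n -> T}) j : fcons t g (lift ord0 j) = g j.
Proof. by rewrite ffunE liftK. Qed.
Lemma ftail_fcons (T : Type) n t (g : {ffun 'I_n -> T}) : ftail (fcons t g) = g.
Proof. by apply/ffunP => j; rewrite ffunE fconsS. Qed.
Lemma fcons_ftail (T : Type) n (f : {ffun 'I_n.+1 -> T}) : fcons (f ord0) (ftail f) = f.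
Proof.
apply/ffunP => i; rewrite ffunE; case: unliftP => [j ->|->] //.
by rewrite ffunE.
Qed.

Lemma sum_ffunS (T : finType) (V : nmodType) n (F : {ffun 'I_n.+1 -> T} -> V) :
  \sum_f F f = \sum_(t : T) \sum_(g : {ffun 'I_n -> T}) F (fcons t g).
Proof.
rewrite pair_big /=.
rewrite (reindex (fun p : T * {ffun 'I_n -> T} => fcons p.1 p.2)) //=.
exists (fun f : {ffun 'I_n.+1 -> T} => (f ord0, ftail f)) => [[t g] _|f _] /=.
  by rewrite fcons0 ftail_fcons.
by rewrite fcons_ftail.
Qed.

Lemma ffun_eqS (T : eqType) n (f g : {ffun 'I_n.+1 -> T}) :
  (f == g) = (f ord0 == g ord0) && (ftail f == ftail g).
Proof.
apply/eqP/andP => [->|[/eqP h0 /eqP ht]]; first by [].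
by rewrite -(fcons_ftail f) -(fcons_ftail g) h0 ht.
Qed.

Section TentRec.
Variable R : comUnitRingType.
Variable IK : bool.
Variable s : R.

Lemma sum_ffun0 (T : finType) (V : nmodType) (F : {ffun 'I_0 -> T} -> V) g0 :
  \sum_g F g = F g0.
Proof.
rewrite (big_pred1 g0) // => g /=; apply/esym/eqP/ffunP => -[m hm]; by exfalso; move: hm; rewrite ltn0.
Qed.

Lemma TentG0 (mu : 'I_0 -> R) x A B sg tau :
  TentG IK s mu x A B sg tau = (A == B)%:R.
Proof.
rewrite /TentG.
have -> : ord_max = ord0 :> 'I_1 by apply/val_inj.
rewrite (eq_bigr (fun _ => 1)); last by move=> p _; rewrite big_ord0.
rewrite big_mkcond sum_ffunS /=.
rewrite (eq_bigr (fun t => if (t == A) && (t == B) then 1 else 0)); last first.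
  by move=> t _; rewrite (sum_ffun0 _ [ffun => t]) fcons0.
rewrite -big_mkcond /=.
rewrite (eq_bigl (fun t => (t == A) && (A == B))); last first.
  by move=> t; case: (t =P A) => // ->.
case: eqP => _; last by rewrite big_pred0 // => t; rewrite andbF.
by rewrite (big_pred1 A) // => t; rewrite andbT.
Qed.

Lemma fcons_inord0 n t (g : {ffun 'I_n -> 'I_3}) : fcons t g (inord 0) = t.
Proof. by rewrite (_ : inord 0 = ord0) ?fcons0 //; apply/val_inj; rewrite /= inordK. Qed.

Lemma fcons_inordS n t (g : {ffun 'I_n.+1 -> 'I_3}) j :
  (j < n.+1)%N -> fcons t g (inord j.+1) = g (inord j).
Proof.
move=> hj; rewrite (_ : inord j.+1 = lift ord0 (inord j)) ?fconsS //.
by apply/val_inj; rewrite /= /bump /= !inordK.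
Qed.

Lemma fcons_max n t (g : {ffun 'I_n.+1 -> 'I_3}) : fcons t g ord_max = g ord_max.
Proof. by rewrite (_ : ord_max = lift ord0 ord_max) ?fconsS //; apply/val_inj. Qed.

Lemma TentGS L (mu : 'I_L.+1 -> R) x A B sg tau :
  TentG IK s mu x A B sg tau =
  \sum_(C : 'I_3) RentG IK s (x / mu ord0) A (sg ord0) C (tau ord0) *
     TentG IK s (fun j : 'I_L => mu (lift ord0 j)) x C B (ftail sg) (ftail tau).
Proof.
rewrite /TentG big_mkcond sum_ffunS /=.
pose P (g : {ffun 'I_L.+1 -> 'I_3}) := \prod_(j < L) RentG IK s (x / mu (lift ord0 j))
   (g (inord j)) (ftail sg j) (g (inord j.+1)) (ftail tau j).
transitivity (\sum_(t : 'I_3) \sum_(g : {ffun 'I_L.+1 -> 'I_3})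
   if (t == A) && (g ord_max == B) then
     RentG IK s (x / mu ord0) t (sg ord0) (g ord0) (tau ord0) * P g else 0).
  apply: eq_bigr => t _; apply: eq_bigr => g _.
  rewrite fcons0 fcons_max; case: ifP => // _.
  rewrite big_ord_recl fcons_inord0 (fcons_inordS _ _ (ltn0Sn _)).
  rewrite (_ : inord 0 = ord0); last by apply/val_inj; rewrite /= inordK.
  congr (_ * _); apply: eq_bigr => j _.
  have hj : (j < L.+1)%N by apply: ltnW; rewrite ltnS.
  have hj' : (j.+1 < L.+1)%N by rewrite ltnS.
  rewrite lift0 (fcons_inordS _ _ hj) (fcons_inordS _ _ hj').
  by rewrite !ffunE.
rewrite (bigD1 A) //= [X in _ + X]big1 ?addr0; last first.
  move=> t /= hA; rewrite (negbTE hA) /=; exact: big1.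
transitivity (\sum_(g : {ffun 'I_L.+1 -> 'I_3}) \sum_(C : 'I_3)
   if (g ord0 == C) && (g ord_max == B) then
     RentG IK s (x / mu ord0) A (sg ord0) C (tau ord0) * P g else 0).
  apply: eq_bigr => g _; rewrite eqxx /=.
  rewrite (bigD1 (g ord0)) //= eqxx /= big1 ?addr0 // => C /negbTE.
  by rewrite eq_sym => ->.
rewrite exchange_big; apply: eq_bigr => C _.
rewrite big_distrr /= [in RHS]big_mkcond; apply: eq_bigr => g _.
by case: ifP; rewrite ?mulr0.
Qed.

End TentRec.

Notation o0 := (@Ordinal 3 0 isT).
Notation o1 := (@Ordinal 3 1 isT).
Notation o2 := (@Ordinal 3 2 isT).

Section YBE.
Variable K : fieldType.
Variable IK : bool.
Variable s : K.
Hypothesis s0 : s != 0.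

Lemma wd11 x : wdG IK s x 1 1 = (x - 1) * ((x - zetaG IK s) + x * (qqG s ^+ 2 - 1)).
Proof. by []. Qed.
Lemma wd22 x : wdG IK s x 2 2 = qqG s * (x - 1) * (x - zetaG IK s) + x * (qqG s ^+ 2 - 1) * (zetaG IK s - 1).
Proof. by []. Qed.
Lemma wd33 x : wdG IK s x 3 3 = (x - 1) * ((x - zetaG IK s) + x * (qqG s ^+ 2 - 1)).
Proof. by []. Qed.
Lemma wd12 x : wdG IK s x 1 2 = (qqG s ^+ 2 - 1) * (zetaG IK s * (x - 1) * s^-1).
Proof. rewrite /wdG /= (_ : (Posz 1 - Posz 2 = Negz 0)%R) //= ?mul0r ?subr0 ?mul1r ?expr1 //. Qed.
Lemma wd23 x : wdG IK s x 2 3 = (qqG s ^+ 2 - 1) * (zetaG IK s * (x - 1) * s^-1).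
Proof. rewrite /wdG /= (_ : (Posz 2 - Posz 3 = Negz 0)%R) //= ?mul0r ?subr0 ?mul1r ?expr1 //. Qed.
Lemma wd13 x : wdG IK s x 1 3 = (qqG s ^+ 2 - 1) * (zetaG IK s * (x - 1) * s^-2 - (x - zetaG IK s)).
Proof. rewrite /wdG /= (_ : (Posz 1 - Posz 3 = Negz 1)%R) //= ?mul0r ?subr0 ?mul1r ?expr1 //. Qed.
Lemma wd21 x : wdG IK s x 2 1 = x * (qqG s ^+ 2 - 1) * ((x - 1) * s).
Proof. rewrite /wdG /= (_ : (Posz 2 - Posz 1 = Posz 1)%R) //= ?mul0r ?subr0 ?mul1r ?expr1 //. Qed.
Lemma wd32 x : wdG IK s x 3 2 = x * (qqG s ^+ 2 - 1) * ((x - 1) * s).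
Proof. rewrite /wdG /= (_ : (Posz 3 - Posz 2 = Posz 1)%R) //= ?mul0r ?subr0 ?mul1r ?expr1 //. Qed.
Lemma wd31 x : wdG IK s x 3 1 = x * (qqG s ^+ 2 - 1) * ((x - 1) * s ^+ 2 - (x - zetaG IK s)).
Proof. rewrite /wdG /= (_ : (Posz 3 - Posz 1 = Posz 2)%R) //= ?mul0r ?subr0 ?mul1r ?expr1 //. Qed.



Lemma ord3P (P : 'I_3 -> Prop) : P o0 -> P o1 -> P o2 -> forall i, P i.
Proof.
move=> h0 h1 h2 [[|[|[|m]]] hm] //.
- by rewrite (bool_irrelevance hm isT).
- by rewrite (bool_irrelevance hm isT).
- by rewrite (bool_irrelevance hm isT).
Qed.

Lemma sum3E (V : nmodType) (G : 'I_3 -> V) : \sum_(i < 3) G i = G o0 + G o1 + G o2.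
Proof.
rewrite !big_ord_recl big_ord0 addr0 addrA.
by congr (G _ + G _ + G _); apply/val_inj.
Qed.

Definition RentN (x : K) (i j k l : nat) : K :=
  match i, j, k, l with
  | 0, 0, 0, 0 => waG IK s x
  | 0, 1, 0, 1 => wbG IK s x
  | 0, 1, 1, 0 => wcG IK s x
  | 0, 2, 0, 2 => ((x - 1) * ((x - zetaG IK s) + x * (qqG s ^+ 2 - 1)))
  | 0, 2, 1, 1 => ((qqG s ^+ 2 - 1) * (zetaG IK s * (x - 1) * s^-1))
  | 0, 2, 2, 0 => ((qqG s ^+ 2 - 1) * (zetaG IK s * (x - 1) * s^-2 - (x - zetaG IK s)))
  | 1, 0, 0, 1 => wcbarG IK s x
  | 1, 0, 1, 0 => wbG IK s x
  | 1, 1, 0, 2 => (x * (qqG s ^+ 2 - 1) * ((x - 1) * s))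
  | 1, 1, 1, 1 => ((qqG s * (x - 1) * (x - zetaG IK s) + x * (qqG s ^+ 2 - 1) * (zetaG IK s - 1)))
  | 1, 1, 2, 0 => ((qqG s ^+ 2 - 1) * (zetaG IK s * (x - 1) * s^-1))
  | 1, 2, 1, 2 => wbG IK s x
  | 1, 2, 2, 1 => wcG IK s x
  | 2, 0, 0, 2 => (x * (qqG s ^+ 2 - 1) * ((x - 1) * s ^+ 2 - (x - zetaG IK s)))
  | 2, 0, 1, 1 => (x * (qqG s ^+ 2 - 1) * ((x - 1) * s))
  | 2, 0, 2, 0 => ((x - 1) * ((x - zetaG IK s) + x * (qqG s ^+ 2 - 1)))
  | 2, 1, 1, 2 => wcbarG IK s x
  | 2, 1, 2, 1 => wbG IK s x
  | 2, 2, 2, 2 => waG IK s x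
  | _, _, _, _ => 0
  end.

Lemma RentGN x (i j k l : 'I_3) : RentG IK s x i j k l = RentN x i j k l.
Proof.
move: i j k l; apply: ord3P; apply: ord3P; apply: ord3P; apply: ord3P;
rewrite /RentG /= ?wd11 ?wd22 ?wd33 ?wd12 ?wd23 ?wd13 ?wd21 ?wd32 ?wd31 //.
Qed.

Definition RentO (x : K) (i j k l : nat) : option K :=
  match i, j, k, l with
  | 0, 0, 0, 0 => Some (waG IK s x)
  | 0, 1, 0, 1 => Some (wbG IK s x)
  | 0, 1, 1, 0 => Some (wcG IK s x)
  | 0, 2, 0, 2 => Some (((x - 1) * ((x - zetaG IK s) + x * (qqG s ^+ 2 - 1))))
  | 0, 2, 1, 1 => Some (((qqG s ^+ 2 - 1) * (zetaG IK s * (x - 1) * s^-1)))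
  | 0, 2, 2, 0 => Some (((qqG s ^+ 2 - 1) * (zetaG IK s * (x - 1) * s^-2 - (x - zetaG IK s))))
  | 1, 0, 0, 1 => Some (wcbarG IK s x)
  | 1, 0, 1, 0 => Some (wbG IK s x)
  | 1, 1, 0, 2 => Some ((x * (qqG s ^+ 2 - 1) * ((x - 1) * s)))
  | 1, 1, 1, 1 => Some (((qqG s * (x - 1) * (x - zetaG IK s) + x * (qqG s ^+ 2 - 1) * (zetaG IK s - 1))))
  | 1, 1, 2, 0 => Some (((qqG s ^+ 2 - 1) * (zetaG IK s * (x - 1) * s^-1)))
  | 1, 2, 1, 2 => Some (wbG IK s x)
  | 1, 2, 2, 1 => Some (wcG IK s x)
  | 2, 0, 0, 2 => Some ((x * (qqG s ^+ 2 - 1) * ((x - 1) * s ^+ 2 - (x - zetaG IK s))))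
  | 2, 0, 1, 1 => Some ((x * (qqG s ^+ 2 - 1) * ((x - 1) * s)))
  | 2, 0, 2, 0 => Some (((x - 1) * ((x - zetaG IK s) + x * (qqG s ^+ 2 - 1))))
  | 2, 1, 1, 2 => Some (wcbarG IK s x)
  | 2, 1, 2, 1 => Some (wbG IK s x)
  | 2, 2, 2, 2 => Some (waG IK s x)
  | _, _, _, _ => None
  end.

Definition valo (o : option K) : K := if o is Some a then a else 0.
Definition mul3 (a b c : option K) : option K :=
  match a, b, c with Some a, Some b, Some c => Some (a * b * c) | _, _, _ => None end.
Definition addo (a b : option K) : option K :=
  match a, b with None, _ => b | _, None => a | Some a, Some b => Some (a + b) end.
Definition sum3o (f : nat -> option K) : option K := addo (addo (f 0%N) (f 1%N)) (f 2%N).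

Lemma valoD a b : valo (addo a b) = valo a + valo b.
Proof. by case: a; case: b => //= *; rewrite ?addr0 ?add0r. Qed.
Lemma valoM a b c : valo (mul3 a b c) = valo a * valo b * valo c.
Proof. by case: a; case: b; case: c => //= *; rewrite ?mulr0 ?mul0r. Qed.
Lemma RentNO x i j k l : RentN x i j k l = valo (RentO x i j k l).
Proof.
by case: i => [|[|[|i]]]; case: j => [|[|[|j]]]; case: k => [|[|[|k]]]; case: l => [|[|[|l]]].
Qed.

Lemma ybeO (w v : K) (A B S E F T : 'I_3) :
  valo (sum3o (fun C => sum3o (fun D => sum3o (fun r =>
     mul3 (RentO w A B C D) (RentO (w * v) C S E r) (RentO v D r F T))))) =
  valo (sum3o (fun C => sum3o (fun D => sum3o (fun r =>
     mul3 (RentO v B S D r) (RentO (w * v) A r C T) (RentO w C D E F))))).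
Proof.
move: A B S E F T; apply: ord3P; apply: ord3P; apply: ord3P; apply: ord3P; apply: ord3P; apply: ord3P.
all: cbv beta iota delta [RentO nat_of_ord valo mul3 addo sum3o].
all: try done.
all: rewrite /waG /wbG /wcG /wcbarG /zetaG /qqG.
all: case: IK.
all: field.
all: try exact s0; try done.
Qed.

Lemma ybe (w v : K) (A B S E F T : 'I_3) :
  \sum_(C < 3) \sum_(D < 3) \sum_(r < 3)
     RentG IK s w A B C D * RentG IK s (w * v) C S E r * RentG IK s v D r F T =
  \sum_(C < 3) \sum_(D < 3) \sum_(r < 3)
     RentG IK s v B S D r * RentG IK s (w * v) A r C T * RentG IK s w C D E F.
Proof.
have := ybeO w v A B S E F T.
rewrite /sum3o !valoD !valoM -!RentNO.
rewrite !sum3E !RentGN.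
move=> h; exact: h.
Qed.
End YBE.

Lemma sum4_perm (I1 I2 I3 I4 : finType) (V : nmodType) (f : I1 -> I2 -> I3 -> I4 -> V) :
  \sum_a \sum_b \sum_c \sum_d f a b c d = \sum_c \sum_d \sum_a \sum_b f a b c d.
Proof.
under eq_bigr do rewrite exchange_big.
under eq_bigr do under eq_bigr do rewrite exchange_big.
rewrite exchange_big; apply: eq_bigr => c _.
by rewrite exchange_big.
Qed.

Section RTT.
Variable K : fieldType.
Variable IK : bool.
Variable s : K.
Hypothesis s0 : s != 0.

Definition KK L (mu : 'I_L -> K) x y (C A' D B' : 'I_3) (sg tau : cfg L) :=
  \sum_(rho : cfg L) TentG IK s mu x C A' sg rho * TentG IK s mu y D B' rho tau.

Lemma KK0 (mu : 'I_0 -> K) x y C A' D B' sg tau :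
  KK mu x y C A' D B' sg tau = (C == A')%:R * (D == B')%:R.
Proof. by rewrite /KK (sum_ffun0 _ sg) !TentG0. Qed.

Lemma KKS L (mu : 'I_L.+1 -> K) x y C A' D B' sg tau :
  KK mu x y C A' D B' sg tau =
  \sum_(E < 3) \sum_(F < 3)
    (\sum_(r < 3) RentG IK s (x / mu ord0) C (sg ord0) E r *
                  RentG IK s (y / mu ord0) D r F (tau ord0)) *
    KK (fun j : 'I_L => mu (lift ord0 j)) x y E A' F B' (ftail sg) (ftail tau).
Proof.
rewrite /KK sum_ffunS.
under eq_bigr => r _.
  under eq_bigr => g _.
    rewrite TentGS TentGS fcons0 ftail_fcons big_distrlr /=.
  over.
over.
rewrite /=.
under [RHS]eq_bigr => E _.
  under eq_bigr => F _.
    rewrite big_distrlr /=.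
  over.
over.
rewrite /= sum4_perm; apply: eq_bigr => E _; apply: eq_bigr => F _.
apply: eq_bigr => r _; apply: eq_bigr => g _.
by rewrite mulrACA.
Qed.

Lemma sum_indr (F : 'I_3 -> K) A : \sum_(C < 3) F C * (C == A)%:R = F A.
Proof.
rewrite (bigD1 A) //= eqxx mulr1 big1 ?addr0 // => C /negbTE ->; by rewrite mulr0.
Qed.
Lemma sum_indl (F : 'I_3 -> K) A : \sum_(C < 3) (A == C)%:R * F C = F A.
Proof.
under eq_bigr do rewrite mulrC eq_sym.
exact: sum_indr.
Qed.

Lemma sum_move (a : 'I_3 -> 'I_3 -> K) (b : 'I_3 -> 'I_3 -> 'I_3 -> 'I_3 -> K)
   (c : 'I_3 -> 'I_3 -> K) :
  \sum_(C < 3) \sum_(D < 3) a C D * (\sum_(E < 3) \sum_(F < 3) b C D E F * c E F) =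
  \sum_(E < 3) \sum_(F < 3) (\sum_(C < 3) \sum_(D < 3) a C D * b C D E F) * c E F.
Proof.
under eq_bigr do under eq_bigr do rewrite big_distrr.
under eq_bigr do under eq_bigr do under eq_bigr do rewrite big_distrr.
under [RHS]eq_bigr do under eq_bigr do rewrite big_distrl.
under [RHS]eq_bigr do under eq_bigr do under eq_bigr do rewrite big_distrl.
rewrite sum4_perm; do 4 (apply: eq_bigr => ? _); by rewrite /= mulrA.
Qed.

Lemma RTT L (mu : 'I_L -> K) (hmu : forall j, mu j != 0) x y (hy : y != 0)
   A B A' B' sg tau :
  \sum_(C < 3) \sum_(D < 3) RentG IK s (x / y) A B C D * KK mu x y C A' D B' sg tau =
  \sum_(C < 3) \sum_(D < 3) KK mu y x B D A C sg tau * RentG IK s (x / y) C D A' B'.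
Proof.
elim: L mu hmu sg tau A B A' B' => [|L IH] mu hmu sg tau A B A' B'.
  under eq_bigr => C _.
    under eq_bigr => D _.
      rewrite KK0 mulrA.
    over.
    rewrite /= sum_indr.
  over.
  rewrite /= sum_indr.
  under [RHS]eq_bigr => C _.
    under eq_bigr => D _.
      rewrite KK0 -mulrA.
    over.
    rewrite /= sum_indl.
  over.
  by rewrite /= sum_indl.
have hm := hmu ord0.
have hxm : x / mu ord0 = (x / y) * (y / mu ord0) by field; apply/andP.
under eq_bigr do under eq_bigr do rewrite KKS.
under [RHS]eq_bigr do under eq_bigr do rewrite KKS.
rewrite /= hxm.
set w := x / y; set v := y / mu ord0.
set mu' := fun j : 'I_L => mu (lift ord0 j).
have hmu' : forall j, mu' j != 0 by move=> j; exact: hmu.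
transitivity (\sum_(E < 3) \sum_(F < 3)
   (\sum_(C < 3) \sum_(D < 3) \sum_(r < 3) RentG IK s w A B C D *
        RentG IK s (w * v) C (sg ord0) E r * RentG IK s v D r F (tau ord0)) *
   KK mu' x y E A' F B' (ftail sg) (ftail tau)).
  rewrite sum_move; apply: eq_bigr => E _; apply: eq_bigr => F _; congr (_ * _).
  apply: eq_bigr => C _; apply: eq_bigr => D _; rewrite big_distrr.
  by apply: eq_bigr => r _; rewrite /= mulrA.
transitivity (\sum_(E < 3) \sum_(F < 3)
   (\sum_(C < 3) \sum_(D < 3) \sum_(r < 3) RentG IK s v B (sg ord0) D r *
        RentG IK s (w * v) A r C (tau ord0) * RentG IK s w C D E F) *
   KK mu' x y E A' F B' (ftail sg) (ftail tau)).
  apply: eq_bigr => E _; apply: eq_bigr => F _; congr (_ * _).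
  exact: (ybe IK s0 w v A B (sg ord0) E F (tau ord0)).
transitivity (\sum_(C < 3) \sum_(D < 3)
   (\sum_(r < 3) RentG IK s v B (sg ord0) D r * RentG IK s (w * v) A r C (tau ord0)) *
   (\sum_(E < 3) \sum_(F < 3) RentG IK s w C D E F * KK mu' x y E A' F B' (ftail sg) (ftail tau))).
  rewrite sum_move; apply: eq_bigr => E _; apply: eq_bigr => F _; congr (_ * _).
  apply: eq_bigr => C _; apply: eq_bigr => D _; rewrite big_distrl.
  by apply: eq_bigr => r _.
transitivity (\sum_(C < 3) \sum_(D < 3)
   (\sum_(r < 3) RentG IK s v B (sg ord0) D r * RentG IK s (w * v) A r C (tau ord0)) *
   (\sum_(E < 3) \sum_(F < 3) KK mu' y x D F C E (ftail sg) (ftail tau) * RentG IK s w E F A' B')).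
  apply: eq_bigr => C _; apply: eq_bigr => D _; congr (_ * _).
  exact: (IH mu' hmu' (ftail sg) (ftail tau) C D A' B').
rewrite sum_move; apply: eq_bigr => E _; apply: eq_bigr => F _; congr (_ * _).
by rewrite exchange_big.
Qed.
End RTT.

Lemma ord0E : (ord0 : 'I_3) = o0. Proof. exact/val_inj. Qed.
Lemma ordmaxE : (ord_max : 'I_3) = o2. Proof. exact/val_inj. Qed.

Section Eig.
Variable K : fieldType.
Variable IK : bool.
Variable s : K.
Hypothesis s0 : s != 0.

Lemma Rc2 u C r : RentG IK s u C o2 o0 r = (C == o0)%:R * wdG IK s u 1 1 * (r == o2)%:R.
Proof.
rewrite RentGN wd11; move: C r; apply: ord3P; apply: ord3P;
cbv beta iota delta [RentN nat_of_ord]; rewrite /= ?mulr1 ?mul1r ?mulr0 ?mul0r //.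
Qed.

Lemma mul_rearr (a b c d : K) : a * (b * c * d) = (a * b) * (c * d).
Proof. by rewrite !mulrA. Qed.

Lemma Tent_eig L (mu : 'I_L -> K) x C rho :
  TentG IK s mu x C ord0 (cfg3 L) rho =
  (C == ord0)%:R * (\prod_(j < L) wdG IK s (x / mu j) 1 1) * (rho == cfg3 L)%:R.
Proof.
elim: L mu C rho => [|L IH] mu C rho.
  rewrite TentG0 big_ord0.
  have -> : rho == cfg3 0 by apply/eqP/ffunP => -[m hm]; exfalso; move: hm; rewrite ltn0.
  by rewrite mulr1 mulr1.
rewrite TentGS.
have ht : ftail (cfg3 L.+1) = cfg3 L by apply/ffunP => j; rewrite !ffunE.
rewrite ht.
under eq_bigr => D _.
  rewrite IH mul_rearr.
  over.
rewrite -big_distrl /= sum_indr.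
rewrite ffun_eqS ht -mulnb natrM big_ord_recl.
have -> : cfg3 L.+1 ord0 = o2 by rewrite ffunE ordmaxE.
rewrite ?ordmaxE ord0E Rc2.
set a := (C == o0)%:R; set b := (rho ord0 == o2)%:R; set c := (ftail rho == cfg3 L)%:R.
set d := wdG IK s (x / mu ord0) 1 1.
set P := \prod_(j < L) _.
by rewrite -!mulrA [b * (P * c)]mulrCA.
Qed.

Lemma Ecomm_gen L (mu : 'I_L -> K) (hmu : forall j, mu j != 0) x y (hy : y != 0)
   (hwa : waG IK s (x / y) != 0) sg tau :
  KK IK s mu x y ord0 ord_max ord0 ord_max sg tau =
  KK IK s mu y x ord0 ord_max ord0 ord_max sg tau.
Proof.
have h := RTT IK s0 hmu x hy o0 o0 o2 o2 sg tau.
rewrite !sum3E !RentGN in h.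
cbv beta iota delta [RentN nat_of_ord] in h.
rewrite ?mul0r ?mulr0 ?add0r ?addr0 in h.
rewrite ord0E ordmaxE.
apply: (mulfI hwa); rewrite [RHS]mulrC; exact: h.
Qed.
End Eig.

Section Morph.
Variables (R S : comUnitRingType) (f : {rmorphism R -> S}).
Variable IK : bool.

Lemma qq_morph s : f (qqG s) = qqG (f s).
Proof. by rewrite /qqG rmorphXn. Qed.
Lemma zeta_morph s : f (zetaG IK s) = zetaG IK (f s).
Proof. by rewrite /zetaG /qqG; case: IK; rewrite ?rmorphN !rmorphXn. Qed.
Lemma wa_morph s z : f (waG IK s z) = waG IK (f s) (f z).
Proof. by rewrite /waG /zetaG /qqG; case: IK; rewrite !(rmorphM, rmorphB, rmorphN, rmorph1, rmorphXn). Qed.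
Lemma wb_morph s z : f (wbG IK s z) = wbG IK (f s) (f z).
Proof. by rewrite /wbG /zetaG /qqG; case: IK; rewrite !(rmorphM, rmorphB, rmorphN, rmorph1, rmorphXn). Qed.
Lemma wc_morph s z : f (wcG IK s z) = wcG IK (f s) (f z).
Proof. by rewrite /wcG /zetaG /qqG; case: IK; rewrite !(rmorphM, rmorphB, rmorphN, rmorph1, rmorphXn). Qed.
Lemma wcbar_morph s z : f (wcbarG IK s z) = wcbarG IK (f s) (f z).
Proof. by rewrite /wcbarG /zetaG /qqG; case: IK; rewrite !(rmorphM, rmorphB, rmorphN, rmorph1, rmorphXn). Qed.
Lemma wd_morph s (hs : s \is a GRing.unit) z a b :
  f (wdG IK s z a b) = wdG IK (f s) (f z) a b.
Proof.
rewrite /wdG /zetaG /qqG; case: (a == b); case: (a == (4 - b)%N); case: (a < b)%N; case: IK;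
by rewrite ?(rmorphM, rmorphB, rmorphD, rmorphN, rmorph1, rmorph0, rmorphXn, (rmorphXz _ _ hs)).
Qed.
Lemma Rent_morph s (hs : s \is a GRing.unit) z i j k l :
  f (RentG IK s z i j k l) = RentG IK (f s) (f z) i j k l.
Proof.
move: i j k l; apply: ord3P; apply: ord3P; apply: ord3P; apply: ord3P;
by rewrite /RentG /= ?rmorph0 ?wa_morph ?wb_morph ?wc_morph ?wcbar_morph ?wd_morph.
Qed.
Lemma Tent_morph L s s' (hs : s \is a GRing.unit) (hs' : f s = s')
   (mu : 'I_L -> R) (mu' : 'I_L -> S) (hu : forall j, mu j \is a GRing.unit)
   (hm : forall j, f (mu j) = mu' j) x x' (hx : f x = x') A B sg tau :
  f (TentG IK s mu x A B sg tau) = TentG IK s' mu' x' A B sg tau.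
Proof.
rewrite /TentG rmorph_sum; apply: eq_bigr => p _; rewrite rmorph_prod.
apply: eq_bigr => j _; by rewrite Rent_morph // rmorphM rmorphV ?hu // hm hx hs'.
Qed.
End Morph.

Section Comm.
Variable K : fieldType.

Lemma polyC_unit (c : K) : c != 0 -> c%:P \is a GRing.unit.
Proof. by move=> hc; rewrite poly_unitE size_polyC hc coefC /= unitfE. Qed.

Lemma tofracC_neq0 (c : K) : c != 0 -> tofrac (c%:P) != 0.
Proof. by move=> hc; rewrite tofrac_eq0 polyC_eq0. Qed.

Lemma XY_neq (y c : K) : y != 0 ->
  tofrac ('X : {poly K}) / tofrac (y%:P) - tofrac (c%:P) != 0.
Proof.
move=> hy; rewrite subr_eq0; apply/negP => /eqP h.
have hY := tofracC_neq0 hy.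
have : tofrac ('X : {poly K}) = tofrac ((c * y)%:P).
  by rewrite polyCM tofracM -h divfK.
move/eqP; rewrite tofrac_eq => /eqP hX.
have := congr1 (fun p : {poly K} => size p) hX.
by rewrite /= size_polyX size_polyC; case: (_ != 0).
Qed.

Lemma Ecomm IK (s : K) (s0 : s != 0) L (mu : 'I_L -> K) (hmu : forall j, mu j != 0)
   x y (hy : y != 0) sg tau :
  KK IK s mu x y ord0 ord_max ord0 ord_max sg tau =
  KK IK s mu y x ord0 ord_max ord0 ord_max sg tau.
Proof.
pose muP := fun j => (mu j)%:P : {poly K}.
pose T1 (a b : {poly K}) := \sum_(rho : cfg L)
   TentG IK s%:P muP a ord0 ord_max sg rho * TentG IK s%:P muP b ord0 ord_max rho tau.
pose P := T1 'X y%:P - T1 y%:P 'X.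
have hsu : s%:P \is a GRing.unit by exact: polyC_unit.
have hmuu : forall j, muP j \is a GRing.unit by move=> j; exact: polyC_unit.
have eK : horner_eval x P = KK IK s mu x y ord0 ord_max ord0 ord_max sg tau -
                            KK IK s mu y x ord0 ord_max ord0 ord_max sg tau.
  have hs1 : horner_eval x s%:P = s by rewrite horner_evalE hornerC.
  have hm1 : forall j, horner_eval x (muP j) = mu j by move=> j; rewrite horner_evalE hornerC.
  have hx1 : horner_eval x 'X = x by rewrite horner_evalE hornerX.
  have hy1 : horner_eval x y%:P = y by rewrite horner_evalE hornerC.
  rewrite /P /T1 rmorphB !rmorph_sum /KK; congr (_ - _); apply: eq_bigr => rho _;
  rewrite rmorphM (Tent_morph IK hsu hs1 hmuu hm1 hx1) (Tent_morph IK hsu hs1 hmuu hm1 hy1) //.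
pose sF := tofrac s%:P; pose muF := fun j => tofrac (muP j).
pose X := tofrac ('X : {poly K}); pose Y := tofrac (y%:P).
have hs2 : tofrac s%:P = sF by [].
have hm2 : forall j, tofrac (muP j) = muF j by [].
have hx2 : tofrac ('X : {poly K}) = X by [].
have hy2 : tofrac (y%:P) = Y by [].
have eF : tofrac P = KK IK sF muF X Y ord0 ord_max ord0 ord_max sg tau -
                     KK IK sF muF Y X ord0 ord_max ord0 ord_max sg tau.
  rewrite /P /T1 rmorphB !rmorph_sum /KK; congr (_ - _); apply: eq_bigr => rho _.
    by rewrite rmorphM (Tent_morph IK hsu hs2 hmuu hm2 hx2) (Tent_morph IK hsu hs2 hmuu hm2 hy2).
  by rewrite rmorphM (Tent_morph IK hsu hs2 hmuu hm2 hx2) (Tent_morph IK hsu hs2 hmuu hm2 hy2).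
have sF0 : sF != 0 by exact: tofracC_neq0.
have muF0 : forall j, muF j != 0 by move=> j; exact: tofracC_neq0.
have Y0 : Y != 0 by exact: tofracC_neq0.
have hwa : waG IK sF (X / Y) != 0.
  rewrite /waG; apply: mulf_neq0.
    have -> : zetaG IK sF = tofrac ((zetaG IK s)%:P).
      by rewrite /sF (zeta_morph polyC) (zeta_morph (@tofrac _)).
    exact: XY_neq.
  have -> : qqG sF ^+ 2 = tofrac ((qqG s ^+ 2)%:P).
    by rewrite /sF (rmorphXn polyC) (qq_morph polyC) (rmorphXn (@tofrac _)) (qq_morph (@tofrac _)).
  exact: XY_neq.
have hF := Ecomm_gen sF0 muF0 Y0 hwa sg tau.
have : tofrac P = 0 by rewrite eF hF subrr.
move/eqP; rewrite tofrac_eq0 => /eqP hP.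
by apply/eqP; rewrite -subr_eq0 -eK hP rmorph0.
Qed.
End Comm.

Lemma inord1E : (inord 1 : 'I_3) = o1. Proof. by apply/val_inj; rewrite /= inordK. Qed.

Section Assembly.
Variable K : fieldType.
Variable IK : bool.
Variable s : K.
Hypothesis s0 : s != 0.
Variable L : nat.
Variable mu : 'I_L -> K.
Hypothesis hmu : forall j, mu j != 0.

Lemma opapp2 (O1 O2 : cfg L -> cfg L -> K) v sg :
  opapp O1 (opapp O2 v) sg = \sum_rho (\sum_tau O1 sg tau * O2 tau rho) * v rho.
Proof.
rewrite /opapp; under eq_bigr do rewrite big_distrr.
rewrite exchange_big; apply: eq_bigr => rho _; rewrite big_distrl.
by apply: eq_bigr => tau _; rewrite /= mulrA.
Qed.

Lemma opapp_ext O (v1 v2 : cfg L -> K) : v1 =1 v2 -> opapp O v1 =1 opapp O v2.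
Proof. by move=> h sg; rewrite /opapp; apply: eq_bigr => tau _; rewrite h. Qed.

Lemma S_opapp x y C A' D B' sg (v : cfg L -> K) :
  \sum_tau KK IK s mu x y C A' D B' sg tau * v tau =
  opapp (Tent IK s mu x C A') (opapp (Tent IK s mu y D B') v) sg.
Proof. by rewrite opapp2. Qed.

Lemma E_comm_op x u (hu : u != 0) v :
  opapp (Eop IK s mu u) (opapp (Eop IK s mu x) v) =1
  opapp (Eop IK s mu x) (opapp (Eop IK s mu u) v).
Proof.
move=> sg; rewrite !opapp2; apply: eq_bigr => rho _; congr (_ * _).
exact: (esym (Ecomm IK s0 hmu x hu sg rho)).
Qed.

Definition Fstep (v : cfg L -> K) (u : K) := opapp (Eop IK s mu u) v.

Lemma foldl_ext us (v1 v2 : cfg L -> K) : v1 =1 v2 ->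
  foldl Fstep v1 us =1 foldl Fstep v2 us.
Proof.
elim: us v1 v2 => [|u us IH] v1 v2 h //=.
by apply: IH; apply: opapp_ext.
Qed.

Lemma foldl_comm x us (hus : forall u, u \in us -> u != 0) v :
  foldl Fstep (opapp (Eop IK s mu x) v) us =1 opapp (Eop IK s mu x) (foldl Fstep v us).
Proof.
elim: us v hus => [|u us IH] v hus //= sg.
have hu : u != 0 by apply: hus; rewrite inE eqxx.
have hus' : forall u', u' \in us -> u' != 0.
  by move=> u' h; apply: hus; rewrite inE h orbT.
rewrite (foldl_ext us (E_comm_op x hu v)) IH //.
Qed.

Lemma Estates_cons x us (hus : forall u, u \in us -> u != 0) :
  Estates IK s mu (x :: us) =1 opapp (Eop IK s mu x) (Estates IK s mu us).
Proof. exact: (foldl_comm x hus (vac0 K (L:=L))). Qed.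

Definition Lam x := \prod_(j < L) wdG IK s (x / mu j) 1 1.

Lemma KK_eig x y D B' tau :
  KK IK s mu x y ord0 ord0 D B' (cfg3 L) tau = Lam x * TentG IK s mu y D B' (cfg3 L) tau.
Proof.
rewrite /KK; under eq_bigr do rewrite Tent_eig eqxx mul1r -/(Lam x).
rewrite (bigD1 (cfg3 L)) //= eqxx [_ * 1%:R]mulr1 big1 ?addr0 // => rho /negbTE ->.
by rewrite mulr0 mul0r.
Qed.

Lemma S_eig x y D B' (v : cfg L -> K) :
  \sum_tau KK IK s mu x y ord0 ord0 D B' (cfg3 L) tau * v tau =
  Lam x * opapp (Tent IK s mu y D B') v (cfg3 L).
Proof.
under eq_bigr do rewrite KK_eig -mulrA.
by rewrite -big_distrr.
Qed.

Lemma lin1 (c : K) (f v : cfg L -> K) :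
  \sum_tau (c * f tau) * v tau = c * \sum_tau f tau * v tau.
Proof. by rewrite big_distrr; apply: eq_bigr => tau _; rewrite /= mulrA. Qed.

Lemma lin3 (c1 c2 c3 : K) (f1 f2 f3 v : cfg L -> K) :
  \sum_tau (f1 tau * c1 + f2 tau * c2 + f3 tau * c3) * v tau =
  (\sum_tau f1 tau * v tau) * c1 + (\sum_tau f2 tau * v tau) * c2 +
  (\sum_tau f3 tau * v tau) * c3.
Proof.
rewrite !big_distrl -!big_split; apply: eq_bigr => tau _ /=.
by rewrite !mulrDl mulrAC [f2 tau * c2 * _]mulrAC [f3 tau * c3 * _]mulrAC.
Qed.

Lemma rel1 x y (hy : y != 0) tau :
  waG IK s (x / y) * KK IK s mu x y ord0 ord0 ord0 ord_max (cfg3 L) tau =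
  KK IK s mu y x ord0 ord_max ord0 ord0 (cfg3 L) tau * wdG IK s (x / y) 1 1 +
  KK IK s mu y x ord0 (inord 1) ord0 (inord 1) (cfg3 L) tau * wdG IK s (x / y) 2 1 +
  KK IK s mu y x ord0 ord0 ord0 ord_max (cfg3 L) tau * wdG IK s (x / y) 3 1.
Proof.
have h := RTT IK s0 hmu x hy o0 o0 o0 o2 (cfg3 L) tau.
rewrite !sum3E !RentGN in h.
cbv beta iota delta [RentN nat_of_ord] in h.
rewrite ?mul0r ?mulr0 ?add0r ?addr0 in h.
rewrite ord0E ordmaxE inord1E wd11 wd21 wd31.
exact: h.
Qed.

Lemma rel2 x y (hy : y != 0) tau :
  waG IK s (x / y) * KK IK s mu x y ord0 (inord 1) ord0 (inord 1) (cfg3 L) tau =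
  KK IK s mu y x ord0 ord_max ord0 ord0 (cfg3 L) tau * wdG IK s (x / y) 1 2 +
  KK IK s mu y x ord0 (inord 1) ord0 (inord 1) (cfg3 L) tau * wdG IK s (x / y) 2 2 +
  KK IK s mu y x ord0 ord0 ord0 ord_max (cfg3 L) tau * wdG IK s (x / y) 3 2.
Proof.
have h := RTT IK s0 hmu x hy o0 o0 o1 o1 (cfg3 L) tau.
rewrite !sum3E !RentGN in h.
cbv beta iota delta [RentN nat_of_ord] in h.
rewrite ?mul0r ?mulr0 ?add0r ?addr0 in h.
rewrite ord0E ordmaxE inord1E wd12 wd22 wd32.
exact: h.
Qed.

Lemma sand1 x y (hy : y != 0) (v : cfg L -> K) :
  waG IK s (x / y) * Lam x * opapp (Eop IK s mu y) v (cfg3 L) =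
  (\sum_tau KK IK s mu y x ord0 ord_max ord0 ord0 (cfg3 L) tau * v tau) * wdG IK s (x / y) 1 1 +
  opapp (Bop IK s mu y) (opapp (Bop IK s mu x) v) (cfg3 L) * wdG IK s (x / y) 2 1 +
  Lam y * opapp (Eop IK s mu x) v (cfg3 L) * wdG IK s (x / y) 3 1.
Proof.
have e : \sum_tau (waG IK s (x / y) * KK IK s mu x y ord0 ord0 ord0 ord_max (cfg3 L) tau) * v tau =
  \sum_tau (KK IK s mu y x ord0 ord_max ord0 ord0 (cfg3 L) tau * wdG IK s (x / y) 1 1 +
  KK IK s mu y x ord0 (inord 1) ord0 (inord 1) (cfg3 L) tau * wdG IK s (x / y) 2 1 +
  KK IK s mu y x ord0 ord0 ord0 ord_max (cfg3 L) tau * wdG IK s (x / y) 3 1) * v tau.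
  by apply: eq_bigr => tau _; rewrite rel1.
rewrite lin1 lin3 !S_eig (S_opapp y x ord0 (inord 1) ord0 (inord 1)) in e.
by rewrite -mulrA; exact: e.
Qed.

Lemma sand2 x y (hy : y != 0) (v : cfg L -> K) :
  waG IK s (x / y) * opapp (Bop IK s mu x) (opapp (Bop IK s mu y) v) (cfg3 L) =
  (\sum_tau KK IK s mu y x ord0 ord_max ord0 ord0 (cfg3 L) tau * v tau) * wdG IK s (x / y) 1 2 +
  opapp (Bop IK s mu y) (opapp (Bop IK s mu x) v) (cfg3 L) * wdG IK s (x / y) 2 2 +
  Lam y * opapp (Eop IK s mu x) v (cfg3 L) * wdG IK s (x / y) 3 2.
Proof.
have e : \sum_tau (waG IK s (x / y) * KK IK s mu x y ord0 (inord 1) ord0 (inord 1) (cfg3 L) tau) * v tau =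
  \sum_tau (KK IK s mu y x ord0 ord_max ord0 ord0 (cfg3 L) tau * wdG IK s (x / y) 1 2 +
  KK IK s mu y x ord0 (inord 1) ord0 (inord 1) (cfg3 L) tau * wdG IK s (x / y) 2 2 +
  KK IK s mu y x ord0 ord0 ord0 ord_max (cfg3 L) tau * wdG IK s (x / y) 3 2) * v tau.
  by apply: eq_bigr => tau _; rewrite rel2.
rewrite lin1 lin3 S_eig (S_opapp y x ord0 (inord 1) ord0 (inord 1))
  (S_opapp x y ord0 (inord 1) ord0 (inord 1)) in e.
exact: e.
Qed.

End Assembly.

Unset Implicit Arguments.
Set Strict Implicit.

Theorem lemma4p2 (K : fieldType) (IK : bool) (s : K) (n : nat)
  (mu : 'I_n.+1 -> K) (x0 x1 : K) (xr : n.-tuple K) :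
  s != 0 ->
  (forall j, mu j != 0) ->
  x0 != 0 -> x1 != 0 -> (forall y, y \in (xr : seq K) -> y != 0) ->
  wd IK s (x1 / x0) 1 2 != 0 ->
  wd IK s (x1 / x0) 3 2 != 0 ->
  omegabar mu x0 != 0 -> omegabar mu x1 != 0 ->
  let y := x1 / x0 in
  let r11 := wd IK s y 1 1 / wd IK s y 1 2 in
  let Om0 := (r11 - wd IK s y 3 1 / wd IK s y 3 2) * Lambdabar IK s mu x0 in
  let Om1 := wa IK s y / wd IK s y 3 2 * Lambdabar IK s mu x1 in
  let Ups0 := (wd IK s y 2 1 / wd IK s y 3 2
               - wd IK s y 2 2 / wd IK s y 3 2 * r11) * omegabar mu x0 in
  let Ups1 := wa IK s y / wd IK s y 3 2 * r11 * omegabar mu x1 in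
  Om0 * ZZ IK s mu (x1 :: xr) + Om1 * ZZ IK s mu (x0 :: xr)
  = Ups0 * Hbar IK s mu x1 x0 xr + Ups1 * Hbar IK s mu x0 x1 xr.
Proof.
move=> hs hmu hx0 hx1 hxr h12 h32 hw0 hw1 y r11 Om0 Om1 Ups0 Ups1.
have Z1e : ZZ IK s mu (x1 :: xr) = opapp (Eop IK s mu x1) (Estates IK s mu xr) (cfg3 n.+1).
  exact: (Estates_cons IK hs hmu x1 hxr (cfg3 _)).
have Z0e : ZZ IK s mu (x0 :: xr) = opapp (Eop IK s mu x0) (Estates IK s mu xr) (cfg3 n.+1).
  exact: (Estates_cons IK hs hmu x0 hxr (cfg3 _)).
have e1 := sand1 IK hs hmu x1 hx0 (Estates IK s mu xr).
have e2 := sand2 IK hs hmu x1 hx0 (Estates IK s mu xr).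
rewrite /Om0 /Om1 /Ups0 /Ups1 /r11 /y /Hbar /Fbar Z1e Z0e.
rewrite /Lambdabar !wdE waE.
rewrite /Lam in e1 e2.
move: e1 e2 h12 h32 hw0 hw1.
rewrite !wdE.
move: (opapp (Eop IK s mu x1) (Estates IK s mu xr) (cfg3 n.+1)) => Z1.
move: (opapp (Eop IK s mu x0) (Estates IK s mu xr) (cfg3 n.+1)) => Z0.
move: (opapp (Bop IK s mu x0) (opapp (Bop IK s mu x1) (Estates IK s mu xr)) (cfg3 n.+1)) => F10.
move: (opapp (Bop IK s mu x1) (opapp (Bop IK s mu x0) (Estates IK s mu xr)) (cfg3 n.+1)) => F01.
move: (\sum_tau _ * Estates IK s mu xr tau) => U.
move: (\prod_(j < n.+1) wdG IK s (x1 / mu j) 1 1) => La1.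
move: (\prod_(j < n.+1) wdG IK s (x0 / mu j) 1 1) => La0.
move: (omegabar mu x0) (omegabar mu x1) => w0 w1.
move: (waG IK s (x1 / x0)) => a.
move: (wdG IK s (x1 / x0) 1 1) (wdG IK s (x1 / x0) 1 2) (wdG IK s (x1 / x0) 2 1)
      (wdG IK s (x1 / x0) 2 2) (wdG IK s (x1 / x0) 3 1) (wdG IK s (x1 / x0) 3 2)
  => d11 d12 d21 d22 d31 d32.
move=> e1 e2 h12 h32 hw0 hw1.
have key : (d11 * d32 - d31 * d12) * La0 * Z1 + a * d12 * La1 * Z0 -
            ((d21 * d12 - d22 * d11) * F10 + a * d11 * F01) = 0.
  have -> : (d11 * d32 - d31 * d12) * La0 * Z1 + a * d12 * La1 * Z0 -
            ((d21 * d12 - d22 * d11) * F10 + a * d11 * F01) =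
            d12 * (a * La1 * Z0 - (U * d11 + F10 * d21 + La0 * Z1 * d31)) -
            d11 * (a * F01 - (U * d12 + F10 * d22 + La0 * Z1 * d32)) by ring.
  by rewrite e1 e2 !subrr !mulr0 subrr.
apply/eqP; rewrite -subr_eq0; apply/eqP.
rewrite -[RHS](mul0r (d12 * d32)^-1) -key.
by field; rewrite h12 h32 hw0 hw1.
Qed.
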